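(* Let $p>q>1$ be relatively prime integers, let $\mathbf{x}$ be a $\frac pq$-automatic sequence produced by the deterministic finite automaton with output $\mathcal{A}=(Q,q_0,A_p,\delta,\tau)$, and let $T(L_{\frac pq})$ be decorated by $\mathbf{x}$. Then for all $h\ge 1$, the number $\#F_h$ of distinct factors of height $h$ of $T(L_{\frac pq})$ satisfies $\#F_h\le 1+q^h\cdot\#Q$.
   Context: $A_p=\{0,\ldots,p-1\}$; for $w=w_\ell\cdots w_0\in A_p^*$, $\mathrm{val}_{\frac pq}(w)=\sum_{i=0}^{\ell}\frac{w_i}{q}(\frac pq)^i$; $\mathrm{rep}_{\frac pq}(n)$ is the unique word not starting with $0$ of value $n$ ($\mathrm{rep}_{\frac pq}(0)=\varepsilon$); $L_{\frac pq}=\{\mathrm{rep}_{\frac pq}(n):n\ge0\}$. $\mathbf{x}$ is $\frac pq$-automatic via $\mathcal{A}$ if $x_n=\tau(\delta(q_0,\mathrm{rep}_{\frac pq}(n)))$ for all $n$. $T(L_{\frac pq})$ is the tree whose nodes are the words of $L_{\frac pq}$, with an edge labeled $d$ from $w$ to $wd$ whenever $w,wd\in L_{\frac pq}$; node $w$ has decoration $x_{\mathrm{val}_{\frac pq}(w)}$. For $w\in L_{\frac pq}$ and $h\ge0$, the factor $T[w,h]$ has domain $w^{-1}L_{\frac pq}\cap A_p^{\le h}$ and node $u$ of it has decoration $x_{\mathrm{val}_{\frac pq}(wu)}$; two factors of height $h$ are equal if they have the same domain and the same decoration at each node. $F_h=\{T[w,h]: w\in L_{\frac pq}\}$. *)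

(* Defs.v *)
From HB Require Import structures.
From mathcomp Require Import all_boot all_order all_algebra.
Set Implicit Arguments. Unset Strict Implicit. Unset Printing Implicit Defensive.
Import Order.TTheory GRing.Theory Num.Theory.
Local Open Scope ring_scope.

(* Words over A_p = {0,...,p-1} are [seq 'I_p], written most significant
   digit first: the word w_l ... w_0 is the list [:: w_l; ...; w_0]. *)

Definition valpq (p q : nat) (w : seq 'I_p) : rat :=
  let r := rev (map (@nat_of_ord p) w) in
  \sum_(i < size w) ((nth 0%N r i)%:R / q%:R) * (p%:R / q%:R) ^+ i.

Definition no_lead0 (p : nat) (w : seq 'I_p) : bool :=
  if w is d :: _ then (d : nat) != 0%N else true.

(* Membership in L_{p/q}: w is rep_{p/q}(n) for some n, i.e. w does not start
   with 0 and its value is a natural number n (rep_{p/q}(n) being the unique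
   such word). *)
Definition inL (p q : nat) (w : seq 'I_p) : bool :=
  no_lead0 w && (valpq q w \is a Num.nat).

Definition valn (p q : nat) (w : seq 'I_p) : nat := Num.truncn (valpq q w).

Definition delta_star (p : nat) (Q : Type) (delta : Q -> 'I_p -> Q)
  (s : Q) (w : seq 'I_p) : Q := foldl delta s w.

Definition pq_automatic (p q : nat) (Q : Type) (Out : Type)
  (q0 : Q) (delta : Q -> 'I_p -> Q) (tau : Q -> Out) (x : nat -> Out) : Prop :=
  forall w : seq 'I_p, inL q w -> x (valn q w) = tau (delta_star delta q0 w).

(* The factor T[w,h] of the tree T(L_{p/q}) decorated by x: a function on the
   words u of length <= h, equal to None if u is not in the domain
   w^{-1}L_{p/q} /\ A_p^{<=h}, and to Some x_{val(wu)} otherwise.  Two factors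
   of height h are equal iff they have the same domain and decorations, i.e.
   iff these finite functions are equal. *)
Definition factor (p q : nat) (Out : Type) (x : nat -> Out)
  (w : seq 'I_p) (h : nat) : {ffun h.-bseq 'I_p -> option Out} :=
  [ffun u : h.-bseq 'I_p =>
     if inL q (w ++ u) then Some (x (valn q (w ++ u))) else None].

(* Main.v *)
Require Import Defs.
From HB Require Import structures.
From mathcomp Require Import all_boot all_order all_algebra.
Set Warnings "-notation-overridden,-ambiguous-paths".
From Stdlib Require Import ClassicalEpsilon.
From mathcomp Require Import ring.
Set Implicit Arguments. Unset Strict Implicit. Unset Printing Implicit Defensive.
Import Order.TTheory GRing.Theory Num.Theory.
Local Open Scope ring_scope.

Lemma valpq_cat (p q : nat) (w u : seq 'I_p) :
  valpq q (w ++ u) = valpq q w * (p%:R / q%:R) ^+ size u + valpq q u.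
Proof.
rewrite /valpq.
rewrite -!(big_mkord xpredT (fun i => (nth 0%N _ i)%:R / q%:R * (p%:R / q%:R) ^+ i)).
rewrite size_cat addnC [LHS](@big_cat_nat _ _ _ (size u)) ?leq_addr //= addrC; congr (_ + _).
  rewrite -{1}(add0n (size u)) big_addn addKn mulr_suml.
  apply: eq_bigr => i _.
  rewrite map_cat rev_cat nth_cat size_rev size_map ltnNge leq_addl /= addnK.
  by rewrite exprD mulrA.
apply: eq_big_nat => i /andP[_ Hi].
by rewrite map_cat rev_cat nth_cat size_rev size_map Hi.
Qed.

Lemma valpq_ge0 (p q : nat) (w : seq 'I_p) : 0 <= valpq q w.
Proof.
by apply: sumr_ge0 => i _; rewrite !mulr_ge0 ?invr_ge0 ?exprn_ge0 ?divr_ge0 ?ler0n.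
Qed.

Lemma no_lead0_cat (p : nat) (w u : seq 'I_p) : w != [::] -> no_lead0 (w ++ u) = no_lead0 w.
Proof. by case: w. Qed.

Lemma inL_cat_eq (p q h : nat) (w1 w2 u : seq 'I_p) : (0 < q)%N ->
  w1 != [::] -> w2 != [::] -> inL q w1 -> inL q w2 ->
  (valn q w1 %% q ^ h = valn q w2 %% q ^ h)%N -> (size u <= h)%N ->
  inL q (w1 ++ u) = inL q (w2 ++ u).
Proof.
move=> q0 n1 n2 /andP[L1 N1] /andP[L2 N2] Hmod Hu.
rewrite /inL !no_lead0_cat // L1 L2 /=.
rewrite !natrEint !valpq_cat !addr_ge0 ?valpq_ge0 ?mulr_ge0 ?exprn_ge0 ?divr_ge0 ?ler0n ?valpq_ge0 //.
rewrite !andbT.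
have E1 := truncnK N1; have E2 := truncnK N2.
rewrite /valn in Hmod.
set a := Num.truncn (valpq q w1) in E1 Hmod; set b := Num.truncn (valpq q w2) in E2 Hmod.
set k := size u in Hu *.
have Ea := divn_eq a (q ^ h); have Eb := divn_eq b (q ^ h).
rewrite Hmod in Ea.
set A := (a %/ q ^ h)%N in Ea; set B := (b %/ q ^ h)%N in Eb; set r := (b %% q ^ h)%N in Ea Eb.
have EQ : (q ^ h = q ^ k * q ^ (h - k))%N by rewrite -expnD subnKC.
have -> : valpq q w1 * (p%:R / q%:R) ^+ k = valpq q w2 * (p%:R / q%:R) ^+ k +
   (A%:R - B%:R) * (q ^ (h - k))%:R * (p ^ k)%:R.
  rewrite -E1 -E2 Ea Eb EQ.
  rewrite !natrD !natrM !natrX expr_div_n.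
  have qk : (q%:R : rat) ^+ k != 0 by rewrite expf_neq0 // pnatr_eq0 -lt0n.
  field.
  exact qk.
rewrite addrAC rpredDr //.
by rewrite !rpredM ?rpredB ?natr_int.
Qed.

Lemma factor_eq (p q h : nat) (Q : finType) (Out : eqType)
  (q0 : Q) (delta : Q -> 'I_p -> Q) (tau : Q -> Out) (x : nat -> Out)
  (w1 w2 : seq 'I_p) : (0 < q)%N -> pq_automatic q q0 delta tau x ->
  w1 != [::] -> w2 != [::] -> inL q w1 -> inL q w2 ->
  (valn q w1 %% q ^ h = valn q w2 %% q ^ h)%N ->
  delta_star delta q0 w1 = delta_star delta q0 w2 ->
  factor q x w1 h = factor q x w2 h.
Proof.
move=> qp Ha n1 n2 I1 I2 Hm Hd; apply/ffunP => u; rewrite !ffunE.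
rewrite (inL_cat_eq (u := u) qp n1 n2 I1 I2 Hm (size_bseq u)).
case: ifP => // I.
have I' : inL q (w1 ++ u) by rewrite (inL_cat_eq (u := u) qp n1 n2 I1 I2 Hm (size_bseq u)).
by rewrite !Ha // /delta_star !foldl_cat -!/(delta_star _ _ _) Hd.
Qed.

Lemma inL_nil (p q : nat) : inL q ([::] : seq 'I_p).
Proof. by rewrite /inL /valpq big_ord0. Qed.

Theorem mainTheorem10 (p q : nat) (Q : finType) (Out : eqType)
  (q0 : Q) (delta : Q -> 'I_p -> Q) (tau : Q -> Out) (x : nat -> Out) :
  (1 < q)%N -> (q < p)%N -> coprime p q ->
  pq_automatic q q0 delta tau x ->
  forall h : nat, (1 <= h)%N ->
  exists s : seq {ffun h.-bseq 'I_p -> option Out},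
    uniq s /\
    (forall f, f \in s <-> exists w : seq 'I_p, inL q w /\ factor q x w h = f) /\
    (size s <= 1 + q ^ h * #|Q|)%N.
Proof.
move=> q1 _ _ Ha h _.
have qp : (0 < q)%N by apply: ltnW.
have qh : (0 < q ^ h)%N by rewrite expn_gt0 qp.
pose P (k : 'I_(q ^ h) * Q) (w : seq 'I_p) :=
  [/\ inL q w, w != [::], (valn q w %% q ^ h)%N = k.1 & delta_star delta q0 w = k.2].
pose rep (k : option ('I_(q ^ h) * Q)) : option (seq 'I_p) :=
  match k with
  | None => Some [::]
  | Some k' => match excluded_middle_informative (exists w, P k' w) with
               | left H => Some (proj1_sig (constructive_indefinite_description _ H))
               | right _ => None
               end
  end.
have repP : forall k w, rep k = Some w -> inL q w /\
   forall k', k = Some k' -> P k' w.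
  case=> [k'|] w /=; last by case=> <-; split=> [|k' //]; exact: inL_nil.
  case: excluded_middle_informative => // H [<-].
  case: constructive_indefinite_description => w' Pw /=.
  by split; [case: Pw | move=> k'' [<-]].
exists (undup (pmap (fun k => omap (fun w => factor q x w h) (rep k)) (enum {: option ('I_(q ^ h) * Q)}))).
split; first exact: undup_uniq.
split.
  move=> f; rewrite mem_undup mem_pmap; split.
    case/mapP=> k _; case E: (rep k) => [w|] //= [->].
    by exists w; split => //; case: (repP _ _ E).
  case=> w [Iw <-]; apply/mapP.
  have [->|nw] := eqVneq w [::].
    by exists None; rewrite ?mem_enum.
  pose k' := (Ordinal (ltn_pmod (valn q w) qh), delta_star delta q0 w).
  have Pw : P k' w by [].
  exists (Some k'); first by rewrite mem_enum.
  rewrite /=; case: excluded_middle_informative => [H|[]]; last by exists w.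
  case: constructive_indefinite_description => w' [I' n' m' d'] /=.
  congr Some; apply: (factor_eq qp Ha) => //.
by rewrite (leq_trans (size_undup _)) // size_pmap (leq_trans (count_size _ _)) // -cardE card_option card_prod card_ord.
Qed.
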